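(* Let $n>1$ be an integer and let $R$ be an $n$-adically closed ring. Assume that for every prime ideal $p\subset R$ and all $a,b\in R$ with $a\notin p$ and $b\in p$, the polynomial $T^n+aT^{n-1}+b\in R[T]$ has a root $\alpha\in R\setminus p$. Then for any two prime ideals $P,Q$ of $R$, either $P+Q=R$ or $P+Q$ is a prime ideal.
   Context: All rings are commutative with $1$. A ring $R$ is $n$-adically closed if every monic polynomial of degree $n$ with coefficients in $R$ has a root in $R$. *)

(* Defs.v *)
(* Ideals are represented as Prop-valued predicates, since the
   sum P + Q of two ideals is not a decidable (boolean) predicate in general. *)
From HB Require Import structures.
From mathcomp Require Import all_boot all_order all_algebra.
Set Implicit Arguments. Unset Strict Implicit. Unset Printing Implicit Defensive.
Import GRing.Theory.
Local Open Scope ring_scope.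

Definition is_ideal (R : comNzRingType) (I : R -> Prop) : Prop :=
  I 0 /\ (forall x y, I x -> I y -> I (x + y)) /\ (forall a x, I x -> I (a * x)).

Definition is_prime_ideal (R : comNzRingType) (I : R -> Prop) : Prop :=
  is_ideal I /\ ~ I 1 /\ (forall x y, I (x * y) -> I x \/ I y).

Definition ideal_sum (R : comNzRingType) (P Q : R -> Prop) : R -> Prop :=
  fun x => exists p q, P p /\ Q q /\ x = p + q.

Definition n_adically_closed (R : comNzRingType) (n : nat) : Prop :=
  forall f : {poly R}, f \is monic -> size f = n.+1 -> exists x : R, root f x.

(* Main.v *)
Require Import Defs.
From HB Require Import structures.
From mathcomp Require Import all_boot all_order all_algebra.
From mathcomp Require Import ring zify.
From Stdlib Require Import Classical.
Import GRing.Theory.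
Local Open Scope ring_scope.

Lemma ideal_opp (R : comNzRingType) (I : R -> Prop) : is_ideal I ->
  forall x, I x -> I (- x).
Proof. move=> [H0 [HD HM]] x Hx. have := HM (-1) x Hx. by rewrite mulN1r. Qed.

Lemma ideal_sub (R : comNzRingType) (I : R -> Prop) : is_ideal I ->
  forall x y, I x -> I y -> I (x - y).
Proof. move=> HI x y Hx Hy. case: (HI) => [_ [HD _]]. by apply: HD => //; apply: ideal_opp. Qed.

Lemma ideal_mulr (R : comNzRingType) (I : R -> Prop) : is_ideal I ->
  forall x a, I x -> I (x * a).
Proof. move=> [_ [_ HM]] x a Hx. rewrite mulrC. exact: HM. Qed.

Lemma ideal_exp (R : comNzRingType) (I : R -> Prop) : is_ideal I ->
  forall x k, I x -> I (x ^+ k.+1).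
Proof. move=> HI x k Hx. rewrite exprSr. case: HI => [_ [_ HM]]. exact: HM. Qed.

Lemma prime_exp (R : comNzRingType) (P : R -> Prop) : is_prime_ideal P ->
  forall x k, P (x ^+ k.+1) -> P x.
Proof.
move=> [_ [_ HP]] x; elim=> [|k IH]; first by rewrite expr1.
rewrite exprS => /HP [] //.
Qed.

Lemma sum_ideal (R : comNzRingType) (P Q : R -> Prop) :
  is_ideal P -> is_ideal Q -> is_ideal (ideal_sum P Q).
Proof.
move=> [P0 [PD PM]] [Q0 [QD QM]]; split; first by exists 0, 0; rewrite addr0.
split.
- move=> x y [p1 [q1 [h1 [h2 ->]]]] [p2 [q2 [h3 [h4 ->]]]].
  exists (p1 + p2), (q1 + q2); split; [exact: PD|split; [exact: QD|ring]].
- move=> a x [p1 [q1 [h1 [h2 ->]]]]. exists (a * p1), (a * q1).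
  split; [exact: PM|split; [exact: QM|ring]].
Qed.

Lemma sumP (R : comNzRingType) (P Q : R -> Prop) : is_ideal Q ->
  forall x, P x -> ideal_sum P Q x.
Proof. move=> [Q0 _] x Hx; exists x, 0; split; [exact: Hx|split; [exact: Q0|by rewrite addr0]]. Qed.

Lemma sumQ (R : comNzRingType) (P Q : R -> Prop) : is_ideal P ->
  forall x, Q x -> ideal_sum P Q x.
Proof. move=> [P0 _] x Hx; exists 0, x; split; [exact: P0|split; [exact: Hx|by rewrite add0r]]. Qed.

Lemma root_Xn (R : comNzRingType) (n : nat) : (0 < n)%N -> n_adically_closed R n ->
  forall r : {poly R}, (size r <= n)%N -> exists x, x ^+ n + r.[x] = 0.
Proof.
move=> n0 Hc r Hr.
have Hs : (size r < size ('X^n : {poly R}))%N by rewrite size_polyXn ltnS.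
have Hm : ('X^n + r) \is monic by rewrite monicE lead_coefDl // lead_coefXn.
have Hz : size ('X^n + r) = n.+1 by rewrite size_polyDl // size_polyXn.
have [x Hx] := Hc ('X^n + r) Hm Hz.
exists x. move/rootP: Hx. by rewrite hornerD hornerXn.
Qed.

Lemma ideal_mull (R : comNzRingType) (I : R -> Prop) : is_ideal I ->
  forall a x, I x -> I (a * x).
Proof. by move=> [_ [_ HM]]. Qed.

Lemma ideal_add (R : comNzRingType) (I : R -> Prop) : is_ideal I ->
  forall x y, I x -> I y -> I (x + y).
Proof. by move=> [_ [HD _]]. Qed.
Arguments ideal_mull {R I} _ a {x}.
Arguments ideal_add {R I} _ {x y}.

Arguments ideal_opp {R I} _ {x}.
Arguments ideal_sub {R I}.
Arguments ideal_mulr {R I}.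
Arguments ideal_exp {R I}.
Arguments prime_exp {R P} _ {x k}.
Arguments sum_ideal {R P Q}.
Arguments sumP {R P Q}.
Arguments sumQ {R P Q}.
Arguments root_Xn {R n}.

Lemma parity_split (n : nat) : (1 < n)%N ->
  exists j, n = (j.+1 + j.+1)%N \/ n = (j.+1 + j.+1).+1%N.
Proof.
move=> Hn.
have : exists k, n = (k + k)%N \/ n = (k + k).+1%N.
  elim: (n) => [|m [k [->|->]]]; first by exists 0%N; left.
  - by exists k; right.
  - by exists k.+1; left; rewrite addnS addSn.
move=> [[|j] [Hj|Hj]]; subst; try by [].
- by exists j; left.
- by exists j; right.
Qed.

Lemma size_mono (R : comNzRingType) (c : R) (i : nat) : (size (c%:P * 'X^i)%R <= i.+1)%N.
Proof.
apply: (leq_trans (size_polyMleq _ _)).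
rewrite size_polyXn addnS /=. rewrite -(add1n i) leq_add2r. exact: size_polyC_leq1.
Qed.

Lemma size_le_add (R : comNzRingType) (p q : {poly R}) m :
  (size p <= m)%N -> (size q <= m)%N -> (size (p + q)%R <= m)%N.
Proof. move=> Hp Hq; apply: (leq_trans (size_polyD _ _)); by rewrite geq_max Hp Hq. Qed.

Lemma size_le_sub (R : comNzRingType) (p q : {poly R}) m :
  (size p <= m)%N -> (size q <= m)%N -> (size (p - q)%R <= m)%N.
Proof. move=> Hp Hq; apply: size_le_add => //; by rewrite size_polyN. Qed.

Lemma in_sum (R : comNzRingType) (P Q : R -> Prop) a b x :
  P a -> Q b -> x = a + b -> ideal_sum P Q x.
Proof. by move=> Ha Hb ->; exists a, b. Qed.

Arguments in_sum {R P Q a b x}.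

Lemma rad2 (n : nat) (R : comNzRingType) (P Q : R -> Prop) :
  (1 < n)%N -> n_adically_closed R n -> is_prime_ideal P -> is_prime_ideal Q ->
  forall z, ideal_sum P Q (z ^+ 2) -> ideal_sum P Q z.
Proof.
move=> Hn Hc HP HQ z [p [q [Hp [Hq Hz]]]].
have n0 : (0 < n)%N by apply: ltnW.
have HPi := HP.1; have HQi := HQ.1.
have HPp := HP.2.2; have HQp := HQ.2.2.
have HI := sum_ideal HPi HQi.
have [j [Hj|Hj]] := parity_split _ Hn.
-
  have Hr0 : (size (- q%:P) <= n)%N.
    by rewrite size_polyN; apply: (leq_trans (size_polyC_leq1 _)); apply: ltnW.
  have [a Ha] := root_Xn n0 Hc (- q%:P) Hr0.
  rewrite hornerN hornerC in Ha.
  have Han : a ^+ n = q by move/eqP: Ha; rewrite subr_eq0 => /eqP.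
  have HaQ : Q a.
    move: Hq; rewrite -Han Hj addSn => /(prime_exp HQ); exact.
  set u := a ^+ j.+1.
  have HuQ : Q u by apply: ideal_exp.
  have Hprod : (u - z) * (u + z) = - p.
    have -> : - p = a ^+ n - z ^+ 2 by rewrite Han Hz; ring.
    by rewrite Hj exprD /u; ring.
  have : P ((u - z) * (u + z)) by rewrite Hprod; apply: ideal_opp.
  move/HPp => [H1|H2].
  + apply: (in_sum (ideal_opp HPi H1) HuQ); ring.
  + apply: (in_sum H2 (ideal_opp HQi HuQ)); ring.
-
  have Hr0 : (size (- 'X^(n.-1) - 1 : {poly R})%R <= n)%N.
    apply: size_le_sub; first by rewrite size_polyN size_polyXn prednK.
    by apply: (leq_trans (size_polyC_leq1 _)).
  have [s0 Hs0] := root_Xn n0 Hc _ Hr0.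
  rewrite !hornerE in Hs0.
  set v := s0 ^+ j.
  have Hs : v * v * s0 * s0 * (s0 - 1) = 1.
    move: Hs0; rewrite Hj /= exprS exprD !exprSr -/v => /eqP.
    rewrite -subr_eq0 => /eqP H; rewrite -[LHS]subr0 -H; ring.
  set r := (q * s0)%:P * 'X^(j.+1) - (q * s0 * s0)%:P * 'X^1
    - q%:P * 'X^(j + j + 1) - (q * z * s0)%:P * 'X^j + (q * z * s0 * s0)%:P * 'X^0.
  have Hr : (size r <= n)%N.
    rewrite /r Hj.
    repeat apply: size_le_add;
      rewrite ?size_polyN; apply: (leq_trans (size_mono _ _ _)); lia.
  have [a Ha] := root_Xn n0 Hc _ Hr.
  rewrite /r !hornerE in Ha.
  set u := a ^+ j.
  set H := s0 * (u - s0) * a - u * u * a - z * s0 * (u - s0).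
  have Ha' : a ^+ n + q * H = 0.
    rewrite -[RHS]Ha /H Hj.
    rewrite !exprS !exprD !exprSr !expr0 -/u /=; ring.
  have HaQ : Q a.
    have : Q (a ^+ n).
      have -> : a ^+ n = - (q * H) by rewrite -[a ^+ n]subr0 -Ha'; ring.
      apply: ideal_opp => //; apply: ideal_mulr => //.
    by rewrite Hj addSn => /(prime_exp HQ).
  have Hprod : (u * a + z * s0) * (u * a + z * (u - s0)) * (a - z) = p * H.
    have -> : p * H = a ^+ n + z ^+ 2 * H.
      rewrite Hz -[LHS]addr0 -Ha'; ring.
    rewrite Hj /H /= !exprS !exprD !exprSr !expr0 -/u; ring.
  have HuaQ : Q (u * a) := ideal_mull HQi u HaQ.
  have Hzs : ideal_sum P Q (z * s0) -> ideal_sum P Q z.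
    move=> Hx. have := ideal_mull HI (v * v * s0 * (s0 - 1)) Hx.
    have -> : v * v * s0 * (s0 - 1) * (z * s0) = z * (v * v * s0 * s0 * (s0 - 1)) by ring.
    by rewrite Hs mulr1.
  have : P ((u * a + z * s0) * (u * a + z * (u - s0)) * (a - z)).
    by rewrite Hprod; apply: ideal_mulr.
  move/HPp => [/HPp [H1|H2]|H3].
  + apply: Hzs; apply: (in_sum H1 (ideal_opp HQi HuaQ)); ring.
  + case: j Hj @u @v Hs {Hr Ha r} H Ha' Hprod HuaQ Hzs H2 => [|j] Hj u v Hs H Ha' Hprod HuaQ Hzs H2.
    *
      have Hu1 : u = 1 by rewrite /u expr0.
      have Hz1 : ideal_sum P Q (z * (1 - s0)).
        apply: (in_sum H2 (ideal_opp HQi HaQ)); rewrite Hu1; ring.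
      have := ideal_mull HI (- (v * v * s0 * s0)) Hz1.
      have -> : - (v * v * s0 * s0) * (z * (1 - s0)) = z * (v * v * s0 * s0 * (s0 - 1)) by ring.
      by rewrite Hs mulr1.
    * have HuQ : Q u by apply: ideal_exp.
      apply: Hzs.
      have HQ2 : Q (u * a + z * u).
        exact: (ideal_add HQi HuaQ (ideal_mull HQi z HuQ)).
      apply: (in_sum (ideal_opp HPi H2) HQ2); ring.
  + apply: (in_sum (ideal_opp HPi H3) HaQ); ring.
Qed.

Arguments rad2 {n R P Q}.

Lemma rad (n : nat) (R : comNzRingType) (P Q : R -> Prop) :
  (1 < n)%N -> n_adically_closed R n -> is_prime_ideal P -> is_prime_ideal Q ->
  forall w m, ideal_sum P Q (w ^+ m.+1) -> ideal_sum P Q w.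
Proof.
move=> Hn Hc HP HQ w; elim=> [|m IH]; first by rewrite expr1.
move=> H; apply: IH; apply: (rad2 Hn Hc HP HQ).
have HI := sum_ideal HP.1 HQ.1.
have -> : (w ^+ m.+1) ^+ 2 = w ^+ m.+2 * w ^+ m by rewrite -exprM -exprD; congr (_ ^+ _); lia.
exact: ideal_mulr.
Qed.

Arguments rad {n R P Q}.

Lemma keyL (n : nat) (R : comNzRingType) :
  (1 < n)%N ->
  n_adically_closed R n ->
  (forall p : R -> Prop, is_prime_ideal p ->
     forall a b : R, ~ p a -> p b ->
       exists alpha : R,
         root ('X^n + a%:P * 'X^(n.-1) + b%:P) alpha /\ ~ p alpha) ->
  forall P Q : R -> Prop, is_prime_ideal P -> is_prime_ideal Q ->
  forall x y, ideal_sum P Q (x * y) -> ~ P y -> ~ P (x + y) ->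
    ideal_sum P Q x \/ ideal_sum P Q y.
Proof.
move=> Hn Hc HT P Q HP HQ x y [p0 [q0 [Hp0 [Hq0 Hxy]]]] Py Pxy.
have HPi := HP.1; have HQi := HQ.1.
have HPp := HP.2.2; have HQp := HQ.2.2.
have HI := sum_ideal HPi HQi.
case: n Hn Hc HT => [|[|m]] // Hn Hc HT.
have Hb : P ((- x) ^+ m * p0) by apply: ideal_mull.
have [al [Hroot Hal]] := HT P HP (x + y) _ Pxy Hb.
move/rootP: Hroot; rewrite !hornerE /= => Heq.
have Heq2 : al ^+ m.+1 * (al + x + y) = - ((- x) ^+ m * p0).
  rewrite -[RHS]add0r -Heq [al ^+ m.+2]exprSr; ring.
have HPa : P (al + x + y).
  have : P (al ^+ m.+1 * (al + x + y)) by rewrite Heq2; apply: ideal_opp.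
  move/HPp => [/(prime_exp HP) //|]; by rewrite -addrA.
set S := \sum_(i < m.+1) al ^+ (m.+1.-1 - i) * (- x) ^+ i.
have HS : (al + x) * S = al ^+ m.+1 - (- x) ^+ m.+1.
  by rewrite subrXX /S opprK.
set G := al ^+ m.+1 + y * S.
have HG : (al + x) * G = (- x) ^+ m * q0.
  have -> : (al + x) * G = al ^+ m.+1 * (al + x + y) - y * (- x) ^+ m.+1 + y * ((al + x) * S - (al ^+ m.+1 - (- x) ^+ m.+1)).
    rewrite /G; ring.
  rewrite HS subrr mulr0 addr0 Heq2.
  have -> : p0 = x * y - q0 by rewrite Hxy; ring.
  rewrite exprSr; ring.
have : Q ((al + x) * G) by rewrite HG; apply: ideal_mull.
move/HQp => [HQa|HQG].
- right. apply: (in_sum HPa (ideal_opp HQi HQa)); ring.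
- left.
  have Hy : P (y * (G - (- x) ^+ m.+1)).
    have -> : y * (G - (- x) ^+ m.+1) = (al + x + y) * (y * S) + y * (al ^+ m.+1 - (- x) ^+ m.+1 - (al + x) * S).
      rewrite /G; ring.
    rewrite HS subrr mulr0 addr0; exact: ideal_mulr.
  move/HPp: Hy => [//|HPG].
  have Hx : ideal_sum P Q ((- x) ^+ m.+1).
    apply: (in_sum (ideal_opp HPi HPG) HQG); ring.
  have := ideal_opp HI (rad Hn Hc HP HQ _ _ Hx).
  by rewrite opprK.
Qed.

Arguments keyL {n R} _ _ _ {P Q} _ _ {x y}.

Theorem mainTheorem4 (n : nat) (R : comNzRingType) :
  (1 < n)%N ->
  n_adically_closed R n ->
  (forall p : R -> Prop, is_prime_ideal p ->
     forall a b : R, ~ p a -> p b ->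
       exists alpha : R,
         root ('X^n + a%:P * 'X^(n.-1) + b%:P) alpha /\ ~ p alpha) ->
  forall P Q : R -> Prop, is_prime_ideal P -> is_prime_ideal Q ->
    (forall x : R, ideal_sum P Q x) \/ is_prime_ideal (ideal_sum P Q).
Proof.
move=> Hn Hc HT P Q HP HQ.
have HPi := HP.1; have HQi := HQ.1.
have HI := sum_ideal HPi HQi.
case: (classic (ideal_sum P Q 1)) => H1.
  left => x. have := ideal_mull HI x H1. by rewrite mulr1.
right; split; first exact: HI.
split; first exact: H1.
move=> x y Hxy.
case: (classic (P y)) => Py; first by right; apply: sumP.
case: (classic (P x)) => Px; first by left; apply: sumP.
case: (classic (exists q1, Q q1 /\ ~ P q1)) => [[q1 [Qq1 Pq1]]|Hno].
- case: (classic (P (x + y))) => Pxy.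
  + have Hxy' : ideal_sum P Q ((x + q1) * y).
      rewrite mulrDl; apply: ideal_add => //; apply: sumQ => //.
      exact: ideal_mulr.
    have Pxy' : ~ P (x + q1 + y).
      move=> H; apply: Pq1.
      have -> : q1 = (x + q1 + y) - (x + y) by ring.
      exact: ideal_sub.
    case: (keyL Hn Hc HT HP HQ Hxy' Py Pxy') => [Hx|Hy]; last by right.
    left. have -> : x = (x + q1) - q1 by ring.
    apply: ideal_sub => //; exact: sumQ.
  + exact: (keyL Hn Hc HT HP HQ Hxy Py Pxy).
- exfalso. case: Hxy => [p [q [Hp [Hq He]]]].
  have Pq : P q.
    case: (classic (P q)) => // nPq; exfalso; apply: Hno; by exists q.
  have : P (x * y) by rewrite He; apply: ideal_add.
  by move/(HP.2.2) => [].
Qed.
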